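(* Let $X,Y$ be compact metric spaces, $f:X\dashrightarrow Y$ a continuous open-dense defined map, and $U\subset X$ an open dense set such that $f(U)$ is open dense in $Y$ and $f|_U:U\to f(U)$ is a proper covering map of finite degree $\deg(f)$. Then $f^*(SM^+(Y))\subset SM^+(X)$, and for every $\nu\in SM^+(Y)$ we have $f^*(\nu)(\pm1)=\deg(f)\,\nu(\pm1)$; in particular $\|f^*(\nu)\|=\deg(f)\|\nu\|$.
   Context: Strong submeasures: sub-linear bounded maps $C^0(X)\to\mathbb{R}$, with norm $\|\mu\|$ the least $C$ with $|\mu(\varphi)|\le C\|\varphi\|_{L^\infty}$; positive means non-decreasing; $SM^+$ denotes positive strong submeasures. A continuous open-dense defined map $f:X\dashrightarrow Y$ is a continuous map defined on an open dense subset of $X$. For open dense $V\subset Y$ and bounded $g:V\to\mathbb{R}$, $E(g)=g$ on $V$ and $E(g)(y)=\limsup_{z\in V,z\to y}g(z)$ for $y\notin V$. For $\varphi\in C^0(X)$, $(f|_U)_*(\varphi)(y)=\sum_{x\in U,f(x)=y}\varphi(x)$ (continuous on $f(U)$) and $f_*(\varphi):=E((f|_U)_*(\varphi))$, a bounded upper-semicontinuous function on $Y$. For $\nu\in SM^+(Y)$ and $\varphi\in C^0(X)$, $f^*(\nu)(\varphi):=\inf\{\nu(\psi):\psi\in C^0(Y),\ \psi\ge f_*(\varphi)\}$. *)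

(* Defs.v *)
From Stdlib Require Import Reals Lra List Classical ClassicalEpsilon.
Open Scope R_scope.

Definition is_metric {X : Type} (d : X -> X -> R) : Prop :=
  (forall x y, 0 <= d x y) /\ (forall x y, d x y = 0 <-> x = y) /\
  (forall x y, d x y = d y x) /\ (forall x y z, d x z <= d x y + d y z).

Definition mopen {X : Type} (d : X -> X -> R) (A : X -> Prop) : Prop :=
  forall x, A x -> exists r, r > 0 /\ forall y, d x y < r -> A y.

Definition dense_set {X : Type} (d : X -> X -> R) (A : X -> Prop) : Prop :=
  forall x r, r > 0 -> exists y, A y /\ d x y < r.

Definition compact_set {X : Type} (d : X -> X -> R) (K : X -> Prop) : Prop :=
  forall (I : Type) (O : I -> X -> Prop),
    (forall i, mopen d (O i)) -> (forall x, K x -> exists i, O i x) ->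
    exists l : list I, forall x, K x -> exists i, In i l /\ O i x.

Definition compact_space {X : Type} (d : X -> X -> R) : Prop :=
  compact_set d (fun _ => True).

Definition distR (a b : R) : R := Rabs (b - a).

Definition continuous_on {X Y : Type} (dX : X -> X -> R) (dY : Y -> Y -> R)
  (A : X -> Prop) (f : X -> Y) : Prop :=
  forall x, A x -> forall e, e > 0 -> exists del, del > 0 /\
    forall x', A x' -> dX x x' < del -> dY (f x) (f x') < e.

Definition cont {X : Type} (dX : X -> X -> R) (phi : X -> R) : Prop :=
  continuous_on dX distR (fun _ => True) phi.

Definition Rsup (P : R -> Prop) : R := epsilon (inhabits 0) (is_lub P).
Definition Rinf (P : R -> Prop) : R := - Rsup (fun r => P (- r)).

(* sup norm ||phi||_{L^infty} (0 on the empty space) *)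
Definition Linf {X : Type} (phi : X -> R) : R :=
  Rsup (fun r => r = 0 \/ exists x, r = Rabs (phi x)).

Definition strong_submeasure {X : Type} (dX : X -> X -> R) (mu : (X -> R) -> R) : Prop :=
  (forall phi psi, cont dX phi -> cont dX psi ->
      mu (fun x => phi x + psi x) <= mu phi + mu psi) /\
  (forall t phi, 0 <= t -> cont dX phi -> mu (fun x => t * phi x) = t * mu phi) /\
  (exists C, forall phi, cont dX phi -> Rabs (mu phi) <= C * Linf phi).

Definition positive_sm {X : Type} (dX : X -> X -> R) (mu : (X -> R) -> R) : Prop :=
  forall phi psi, cont dX phi -> cont dX psi -> (forall x, phi x <= psi x) -> mu phi <= mu psi.

Definition SMplus {X : Type} (dX : X -> X -> R) (mu : (X -> R) -> R) : Prop :=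
  strong_submeasure dX mu /\ positive_sm dX mu.

Definition smnorm {X : Type} (dX : X -> X -> R) (mu : (X -> R) -> R) : R :=
  Rinf (fun C => 0 <= C /\ forall phi, cont dX phi -> Rabs (mu phi) <= C * Linf phi).

Definition image {X Y : Type} (U : X -> Prop) (f : X -> Y) : Y -> Prop :=
  fun y => exists x, U x /\ f x = y.

Definition proper_covering {X Y : Type} (dX : X -> X -> R) (dY : Y -> Y -> R)
  (U : X -> Prop) (f : X -> Y) (d : nat) : Prop :=
  continuous_on dX dY U f /\
  (forall K : Y -> Prop, (forall y, K y -> image U f y) -> compact_set dY K ->
      compact_set dX (fun x => U x /\ K (f x))) /\
  (forall y, image U f y ->
     exists W : Y -> Prop, mopen dY W /\ W y /\ (forall w, W w -> image U f w) /\
     exists S : nat -> X -> Prop,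
       (forall i, (i < d)%nat ->
          mopen dX (S i) /\ (forall x, S i x -> U x /\ W (f x)) /\
          exists g : Y -> X, continuous_on dY dX W g /\
            (forall w, W w -> S i (g w) /\ f (g w) = w) /\
            (forall x, S i x -> g (f x) = x)) /\
       (forall i j x, (i < d)%nat -> (j < d)%nat -> S i x -> S j x -> i = j) /\
       (forall x, U x -> W (f x) -> exists i, (i < d)%nat /\ S i x)).

Definition fiber_list {X Y : Type} (U : X -> Prop) (f : X -> Y) (y : Y) : list X :=
  epsilon (inhabits nil) (fun l => NoDup l /\ forall x, In x l <-> (U x /\ f x = y)).

Definition pushU {X Y : Type} (U : X -> Prop) (f : X -> Y) (phi : X -> R) (y : Y) : R :=
  fold_right Rplus 0 (map phi (fiber_list U f y)).

Definition limsup_at {Y : Type} (dY : Y -> Y -> R) (V : Y -> Prop) (g : Y -> R) (y : Y) : R :=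
  Rinf (fun s => exists r, r > 0 /\
          s = Rsup (fun t => exists z, V z /\ dY z y < r /\ t = g z)).

Definition Ext {Y : Type} (dY : Y -> Y -> R) (V : Y -> Prop) (g : Y -> R) (y : Y) : R :=
  match excluded_middle_informative (V y) with
  | left _ => g y
  | right _ => limsup_at dY V g y
  end.

Definition push {X Y : Type} (dY : Y -> Y -> R) (U : X -> Prop) (f : X -> Y)
  (phi : X -> R) : Y -> R :=
  Ext dY (image U f) (pushU U f phi).

Definition pull {X Y : Type} (dY : Y -> Y -> R) (U : X -> Prop) (f : X -> Y)
  (nu : (Y -> R) -> R) (phi : X -> R) : R :=
  Rinf (fun s => exists psi, cont dY psi /\ (forall y, push dY U f phi y <= psi y) /\ s = nu psi).

(* Main.v *)
Require Import Defs.
From Stdlib Require Import Reals Lra Lia List Classical ClassicalEpsilon FunctionalExtensionality PropExtensionality.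
Open Scope R_scope.

Lemma Rsup_lub (P : R -> Prop) : (exists x, P x) -> (exists B, forall x, P x -> x <= B) -> is_lub P (Rsup P).
Proof.
  intros [x Hx] [B HB]. unfold Rsup. apply epsilon_spec.
  destruct (completeness P) as [m Hm]. exists B; exact HB. exists x; exact Hx. exists m; exact Hm.
Qed.

Lemma Rinf_spec (P : R -> Prop) m : (exists x, P x) -> (forall x, P x -> m <= x) ->
  (forall x, P x -> Rinf P <= x) /\ (forall c, (forall x, P x -> c <= x) -> c <= Rinf P).
Proof.
  intros [x0 Hx0] Hm. unfold Rinf.
  assert (H: is_lub (fun r => P (-r)) (Rsup (fun r => P (-r)))).
  { apply Rsup_lub. exists (-x0). rewrite Ropp_involutive; auto.
    exists (-m). intros r Hr. specialize (Hm _ Hr). lra. }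
  destruct H as [Hub Hl]. split.
  - intros x Hx. assert (-x <= Rsup (fun r => P (-r))). { apply Hub. rewrite Ropp_involutive; auto. } lra.
  - intros c Hc. assert (Rsup (fun r => P (-r)) <= -c). { apply Hl. intros r Hr. specialize (Hc _ Hr). lra. } lra.
Qed.

Lemma Rinf_min (P : R -> Prop) s0 : P s0 -> (forall x, P x -> s0 <= x) -> Rinf P = s0.
Proof.
  intros H0 H. destruct (Rinf_spec P s0 (ex_intro _ s0 H0) H) as [H1 H2].
  specialize (H1 _ H0). specialize (H2 _ H). lra.
Qed.

Lemma cont_const {X} (d : X -> X -> R) c : cont d (fun _ => c).
Proof. intros x _ e He. exists 1. split. lra. intros. unfold distR.
  replace (c - c) with 0 by ring. rewrite Rabs_R0. lra. Qed.

Lemma cont_plus {X} (d : X -> X -> R) a b : cont d a -> cont d b -> cont d (fun x => a x + b x).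
Proof. intros ha hb x _ e He.
  destruct (ha x I (e/2)) as [d1 [Hd1 H1]]. lra.
  destruct (hb x I (e/2)) as [d2 [Hd2 H2]]. lra.
  exists (Rmin d1 d2). split. apply Rmin_pos; auto.
  intros y _ Hy. specialize (H1 y I ltac:(pose proof (Rmin_l d1 d2); lra)).
  specialize (H2 y I ltac:(pose proof (Rmin_r d1 d2); lra)). unfold distR in *.
  replace (a y + b y - (a x + b x)) with ((a y - a x) + (b y - b x)) by ring.
  pose proof (Rabs_triang (a y - a x) (b y - b x)). lra.
Qed.

Lemma cont_scale {X} (d : X -> X -> R) t a : cont d a -> cont d (fun x => t * a x).
Proof. intros ha x _ e He.
  pose proof (Rabs_pos t) as Ht.
  destruct (ha x I (e/(Rabs t + 1))) as [d1 [Hd1 H1]]. apply Rdiv_lt_0_compat; lra.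
  exists d1. split; auto. intros y _ Hy. specialize (H1 y I Hy). unfold distR in *.
  replace (t * a y - t * a x) with (t * (a y - a x)) by ring. rewrite Rabs_mult.
  set (e' := e / (Rabs t + 1)) in *.
  assert (e' * (Rabs t + 1) = e) by (unfold e'; field; lra).
  pose proof (Rabs_pos (a y - a x)). nra.
Qed.

Lemma dense_le {Y} (dY : Y -> Y -> R) V (a b : Y -> R) : dense_set dY V -> cont dY a -> cont dY b ->
 (forall z, V z -> a z <= b z) -> forall y, a y <= b y.
Proof.
  intros hV ha hb H y. destruct (Rle_lt_dec (a y) (b y)) as [h|h]; auto. exfalso.
  set (e := (a y - b y)/2).
  destruct (ha y I e) as [d1 [Hd1 H1]]. unfold e; lra.
  destruct (hb y I e) as [d2 [Hd2 H2]]. unfold e; lra.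
  destruct (hV y (Rmin d1 d2)) as [z [Vz dz]]. apply Rmin_pos; auto.
  specialize (H1 z I ltac:(pose proof (Rmin_l d1 d2); lra)).
  specialize (H2 z I ltac:(pose proof (Rmin_r d1 d2); lra)). unfold distR in *.
  apply Rabs_def2 in H1. apply Rabs_def2 in H2. specialize (H z Vz). unfold e in *. lra.
Qed.

Lemma sumR_le_in (l : list R) r : In r l -> Rabs r <= fold_right Rplus 0 (map Rabs l).
Proof. induction l; simpl; intros H. contradiction.
  pose proof (Rabs_pos a). assert (0 <= fold_right Rplus 0 (map Rabs l)).
  { clear. induction l; simpl. lra. pose proof (Rabs_pos a); lra. }
  destruct H as [->|H]. lra. specialize (IHl H). lra. Qed.

Lemma cont_bounded {X} (d : X -> X -> R) phi : compact_space d -> cont d phi -> exists M, forall x, Rabs (phi x) <= M.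
Proof.
  intros hc hphi.
  destruct (hc R (fun r x => Rabs (phi x) < r)) as [l Hl].
  - intros n x Hx. destruct (hphi x I (n - Rabs (phi x))) as [del [Hdel H]]. lra.
    exists del. split; auto. intros y Hy. specialize (H y I Hy). unfold distR in H.
    pose proof (Rabs_triang_inv (phi y) (phi x)). lra.
  - intros x _. exists (Rabs (phi x) + 1). lra.
  - exists (fold_right Rplus 0 (map Rabs l)). intros x.
    destruct (Hl x I) as [r [Hr Hx]]. pose proof (sumR_le_in l r Hr). pose proof (Rle_abs r). lra.
Qed.

Lemma Linf_lub {X} (phi : X -> R) M : (forall x, Rabs (phi x) <= M) ->
  is_lub (fun r => r = 0 \/ exists x, r = Rabs (phi x)) (Linf phi).
Proof. intros H. unfold Linf. apply Rsup_lub. exists 0; auto.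
  exists (Rmax 0 M). intros r [->|[x ->]]. apply Rmax_l. pose proof (Rmax_r 0 M). specialize (H x). lra. Qed.

Lemma Linf_props {X} (d : X -> X -> R) phi : compact_space d -> cont d phi ->
  (forall x, Rabs (phi x) <= Linf phi) /\ 0 <= Linf phi.
Proof. intros hc hp. destruct (cont_bounded d phi hc hp) as [M HM].
  destruct (Linf_lub phi M HM) as [H1 H2]. split. intros x. apply H1. right; eauto. apply H1; auto. Qed.

Lemma Linf_le {X} (phi : X -> R) c : 0 <= c -> (forall x, Rabs (phi x) <= c) -> Linf phi <= c.
Proof. intros h0 H. destruct (Linf_lub phi c H) as [H1 H2]. apply H2. intros r [->|[x ->]]; auto. Qed.

Lemma Ext_le {Y} (dY : Y -> Y -> R) (V : Y -> Prop) (g Psi : Y -> R) B :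
  is_metric dY -> dense_set dY V -> (forall z, V z -> Rabs (g z) <= B) -> cont dY Psi ->
  (forall z, V z -> g z <= Psi z) -> forall y, Ext dY V g y <= Psi y.
Proof.
  intros hY hV hB hPsi hle y. unfold Ext. destruct (excluded_middle_informative (V y)) as [Hy|Hy]. auto.
  unfold limsup_at.
  destruct hY as [_ [_ [hsym _]]].
  assert (HT: forall r, r > 0 -> is_lub (fun t => exists z, V z /\ dY z y < r /\ t = g z)
                                   (Rsup (fun t => exists z, V z /\ dY z y < r /\ t = g z))).
  { intros r Hr. apply Rsup_lub.
    - destruct (hV y r Hr) as [z [Vz dz]]. exists (g z). exists z. split; auto. split; auto. rewrite hsym; auto.
    - exists B. intros t [z [Vz [_ ->]]]. specialize (hB z Vz). pose proof (Rle_abs (g z)). lra. }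
  destruct (Rinf_spec (fun s => exists r, r > 0 /\ s = Rsup (fun t => exists z, V z /\ dY z y < r /\ t = g z)) (-B)) as [H1 _].
  - exists (Rsup (fun t => exists z, V z /\ dY z y < 1 /\ t = g z)). exists 1. split; auto. lra.
  - intros s [r [Hr ->]]. destruct (HT r Hr) as [Hub _].
    destruct (hV y r Hr) as [z [Vz dz]]. specialize (hB z Vz).
    assert (g z <= Rsup (fun t => exists z, V z /\ dY z y < r /\ t = g z)).
    { apply Hub. exists z. split; auto. split; auto. rewrite hsym; auto. }
    pose proof (Rle_abs (- g z)). rewrite Rabs_Ropp in H0. lra.
  - destruct (Rle_lt_dec (Rinf (fun s => exists r, r > 0 /\ s = Rsup (fun t => exists z, V z /\ dY z y < r /\ t = g z))) (Psi y)) as [h|h]; auto.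
    exfalso.
    set (I0 := Rinf (fun s => exists r, r > 0 /\ s = Rsup (fun t => exists z, V z /\ dY z y < r /\ t = g z))) in *.
    set (e := (I0 - Psi y)/2).
    destruct (hPsi y I e) as [del [Hdel Hc]]. unfold e; lra.
    assert (Rsup (fun t => exists z, V z /\ dY z y < del /\ t = g z) <= Psi y + e).
    { destruct (HT del Hdel) as [_ Hl]. apply Hl. intros t [z [Vz [dz ->]]].
      specialize (Hc z I ltac:(rewrite hsym; auto)). unfold distR in Hc. apply Rabs_def2 in Hc.
      specialize (hle z Vz). lra. }
    assert (I0 <= Rsup (fun t => exists z, V z /\ dY z y < del /\ t = g z)).
    { apply H1. exists del. split; auto. }
    unfold e in *. lra.
Qed.

Lemma sumL_plus {X} (l : list X) (a b : X -> R) :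
  fold_right Rplus 0 (map (fun x => a x + b x) l) = fold_right Rplus 0 (map a l) + fold_right Rplus 0 (map b l).
Proof. induction l; simpl; lra. Qed.
Lemma sumL_scale {X} (l : list X) t (a : X -> R) :
  fold_right Rplus 0 (map (fun x => t * a x) l) = t * fold_right Rplus 0 (map a l).
Proof. induction l; simpl; lra. Qed.
Lemma sumL_mono {X} (l : list X) (a b : X -> R) : (forall x, a x <= b x) ->
  fold_right Rplus 0 (map a l) <= fold_right Rplus 0 (map b l).
Proof. intros H; induction l; simpl. lra. specialize (H a0). lra. Qed.
Lemma sumL_const {X} (l : list X) c :
  fold_right Rplus 0 (map (fun _ => c) l) = INR (length l) * c.
Proof. induction l; simpl length; rewrite ?S_INR; simpl; lra. Qed.
Lemma sumL_bound {X} (l : list X) (a : X -> R) M : (forall x, Rabs (a x) <= M) ->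
  Rabs (fold_right Rplus 0 (map a l)) <= INR (length l) * M.
Proof. intros H; induction l; simpl length; rewrite ?S_INR; simpl. rewrite Rabs_R0; lra.
  pose proof (Rabs_triang (a a0) (fold_right Rplus 0 (map a l))). specialize (H a0). lra. Qed.

Lemma NoDup_map_on {X} (p : nat -> X) l : NoDup l ->
  (forall i j, In i l -> In j l -> p i = p j -> i = j) -> NoDup (map p l).
Proof. induction 1 as [|a l Ha Hl IH]; intros H; simpl; constructor.
  - intros Hin. apply in_map_iff in Hin. destruct Hin as [j [Hj Hjl]].
    assert (j = a) by (apply H; simpl; auto). subst. contradiction.
  - apply IH. intros; apply H; simpl; auto.
Qed.

Lemma fiber_len {X Y} dX dY (U : X -> Prop) (f : X -> Y) deg : proper_covering dX dY U f deg ->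
  forall y, image U f y -> length (fiber_list U f y) = deg.
Proof.
  intros [_ [_ Hc]] y Hy.
  destruct (Hc y Hy) as [W [_ [Wy [_ [S [HS [Hdisj Hcov]]]]]]].
  destruct Hy as [x0 [Ux0 fx0]].
  set (p := fun i => epsilon (inhabits x0) (fun x => (i < deg)%nat -> S i x /\ f x = y)).
  assert (Hp: forall i, (i < deg)%nat -> S i (p i) /\ f (p i) = y).
  { intros i Hi. unfold p. apply (epsilon_spec (inhabits x0) (fun x => (i < deg)%nat -> S i x /\ f x = y)); [|exact Hi].
    destruct (HS i Hi) as [_ [_ [g [_ [Hg _]]]]]. exists (g y). intros _. apply Hg; auto. }
  set (l0 := map p (seq 0 deg)).
  assert (Hmem: forall x, In x l0 <-> (U x /\ f x = y)).
  { intros x. unfold l0. rewrite in_map_iff. split.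
    - intros [i [<- Hi]]. apply in_seq in Hi. destruct (Hp i ltac:(lia)) as [Si fi].
      destruct (HS i ltac:(lia)) as [_ [HSU _]]. split; auto. apply (HSU _ Si).
    - intros [Ux fx]. destruct (Hcov x Ux ltac:(rewrite fx; auto)) as [i [Hi Si]].
      exists i. split. 2: apply in_seq; lia.
      destruct (HS i Hi) as [_ [_ [g [_ [Hg1 Hg2]]]]]. destruct (Hp i Hi) as [Spi fpi].
      rewrite <- (Hg2 _ Spi), <- (Hg2 _ Si), fx, fpi. reflexivity. }
  assert (Hnd: NoDup l0).
  { unfold l0. apply NoDup_map_on. apply seq_NoDup.
    intros i j Hi Hj Hij. apply in_seq in Hi. apply in_seq in Hj.
    destruct (Hp i ltac:(lia)) as [Si _]. destruct (Hp j ltac:(lia)) as [Sj _].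
    rewrite Hij in Si. apply (Hdisj i j (p j)); auto; lia. }
  unfold fiber_list.
  destruct (epsilon_spec (inhabits nil) (fun l => NoDup l /\ forall x, In x l <-> (U x /\ f x = y))
             (ex_intro _ l0 (conj Hnd Hmem))) as [Hnd' Hmem'].
  set (l1 := epsilon _ _) in *.
  assert (length l1 <= length l0)%nat. { apply NoDup_incl_length; auto. intros x Hx. apply Hmem, Hmem'; auto. }
  assert (length l0 <= length l1)%nat. { apply NoDup_incl_length; auto. intros x Hx. apply Hmem', Hmem; auto. }
  assert (length l0 = deg). { unfold l0. rewrite length_map, length_seq. auto. }
  lia.
Qed.

Lemma fun_const_eq {Y} (t : R) : (fun _ : Y => t * 1) = (fun _ => t).
Proof. apply functional_extensionality; intros; ring. Qed.
Lemma fun_const_eq' {Y} (t : R) : (fun _ : Y => t * -1) = (fun _ => -t).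
Proof. apply functional_extensionality; intros; ring. Qed.

Lemma sm_const_pos {Y} (d : Y -> Y -> R) mu c : SMplus d mu -> 0 <= c ->
  mu (fun _ => c) = c * mu (fun _ => 1).
Proof. intros [[_ [Hh _]] _] hc. rewrite <- (Hh c (fun _ => 1) hc (cont_const d 1)). rewrite fun_const_eq. auto. Qed.
Lemma sm_const_neg {Y} (d : Y -> Y -> R) mu c : SMplus d mu -> 0 <= c ->
  mu (fun _ => - c) = c * mu (fun _ => -1).
Proof. intros [[_ [Hh _]] _] hc. rewrite <- (Hh c (fun _ => -1) hc (cont_const d (-1))). rewrite fun_const_eq'. auto. Qed.
Lemma sm_zero {Y} (d : Y -> Y -> R) mu : SMplus d mu -> mu (fun _ => 0) = 0.
Proof. intros H. rewrite (sm_const_pos d mu 0 H ltac:(lra)). ring. Qed.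
Lemma sm_one {Y} (d : Y -> Y -> R) mu : SMplus d mu ->
  mu (fun _ => -1) <= mu (fun _ => 1) /\ - mu (fun _ => -1) <= mu (fun _ => 1).
Proof. intros H. pose proof H as [[Hs _] Hp].
  assert (mu (fun _ => -1) <= mu (fun _ => 1)). { apply Hp; try apply cont_const. intros; lra. }
  pose proof (Hs (fun _ => 1) (fun _ => -1) (cont_const d 1) (cont_const d (-1))).
  cbv beta in H1. replace (fun _ : Y => 1 + -1) with (fun _ : Y => 0) in H1 by (apply functional_extensionality; intros; ring).
  rewrite (sm_zero d mu H) in H1. lra.
Qed.

Lemma smnorm_lemma {Z} (d : Z -> Z -> R) mu : SMplus d mu -> compact_space d ->
  smnorm d mu = mu (fun _ => 1).
Proof.
  intros H hc. pose proof (sm_one d mu H) as [h1 h2]. pose proof H as [[_ [_ [C0 HC0]]] Hp].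
  unfold smnorm. apply Rinf_min.
  - split. lra. intros phi hphi. destruct (Linf_props d phi hc hphi) as [Hb HL].
    set (L := Linf phi) in *.
    assert (mu phi <= mu (fun _ => L)). { apply Hp; auto. apply cont_const. intros x. specialize (Hb x). pose proof (Rle_abs (phi x)). lra. }
    assert (mu (fun _ => - L) <= mu phi). { apply Hp; auto. apply cont_const. intros x. specialize (Hb x). pose proof (Rle_abs (- phi x)) as Hq. rewrite Rabs_Ropp in Hq. lra. }
    rewrite (sm_const_pos d mu L H HL) in H0. rewrite (sm_const_neg d mu L H HL) in H1.
    apply Rabs_le. split; nra.
  - intros c [hc0 Hc]. specialize (Hc (fun _ => 1) (cont_const d 1)).
    assert (Linf (fun _ : Z => 1) <= 1). { apply Linf_le. lra. intros; rewrite Rabs_R1; lra. }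
    pose proof (Rle_abs (mu (fun _ => 1))).
    assert (0 <= Linf (fun _ : Z => 1)). { apply (Linf_props d (fun _ => 1) hc (cont_const d 1)). }
    nra.
Qed.

Theorem theorem2p12 (X Y : Type) (dX : X -> X -> R) (dY : Y -> Y -> R)
  (hX : is_metric dX) (hY : is_metric dY)
  (cX : compact_space dX) (cY : compact_space dY)
  (dom : X -> Prop) (f : X -> Y)
  (hdom_open : mopen dX dom) (hdom_dense : dense_set dX dom)
  (hf : continuous_on dX dY dom f)
  (U : X -> Prop) (deg : nat)
  (hU_open : mopen dX U) (hU_dense : dense_set dX U) (hU_dom : forall x, U x -> dom x)
  (hV_open : mopen dY (image U f)) (hV_dense : dense_set dY (image U f))
  (hcov : proper_covering dX dY U f deg) :
  (forall nu, SMplus dY nu -> SMplus dX (pull dY U f nu)) /\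
  (forall nu, SMplus dY nu ->
     pull dY U f nu (fun _ => 1) = INR deg * nu (fun _ => 1) /\
     pull dY U f nu (fun _ => -1) = INR deg * nu (fun _ => -1) /\
     smnorm dX (pull dY U f nu) = INR deg * smnorm dY nu).
Proof.
  pose proof (fiber_len dX dY U f deg hcov) as Hlen.
  assert (HpB : forall phi, cont dX phi -> forall y, image U f y -> Rabs (pushU U f phi y) <= INR deg * Linf phi).
  { intros phi hphi y Hy. unfold pushU. rewrite <- (Hlen y Hy). apply sumL_bound.
    apply (Linf_props dX phi cX hphi). }
  assert (HpC : forall c y, image U f y -> pushU U f (fun _ => c) y = INR deg * c).
  { intros c y Hy. unfold pushU. rewrite sumL_const, Hlen; auto. }
  set (A := fun (nu : (Y->R)->R) phi s => exists psi, cont dY psi /\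
          (forall y, image U f y -> pushU U f phi y <= psi y) /\ s = nu psi).
  assert (HpullA : forall nu phi, cont dX phi -> pull dY U f nu phi = Rinf (A nu phi)).
  { intros nu phi hphi. unfold pull. f_equal. apply functional_extensionality; intro s.
    apply propositional_extensionality.
    split; intros [psi [h1 [h2 h3]]]; exists psi; repeat split; auto.
    - intros y Hy. specialize (h2 y). unfold push, Ext in h2.
      destruct excluded_middle_informative; [auto|contradiction].
    - intros y. unfold push. apply (Ext_le dY _ _ _ (INR deg * Linf phi)); auto. }
  assert (HAspec : forall nu, SMplus dY nu -> forall phi, cont dX phi ->
     (forall s, A nu phi s -> pull dY U f nu phi <= s) /\
     (forall c, (forall s, A nu phi s -> c <= s) -> c <= pull dY U f nu phi) /\
     pull dY U f nu phi <= nu (fun _ => INR deg * Linf phi) /\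
     nu (fun _ => - (INR deg * Linf phi)) <= pull dY U f nu phi).
  { intros nu hnu phi hphi. rewrite (HpullA nu phi hphi).
    set (D := INR deg * Linf phi).
    assert (HAin : A nu phi (nu (fun _ => D))).
    { exists (fun _ => D). split. apply cont_const. split; auto. intros y Hy.
      specialize (HpB phi hphi y Hy). pose proof (Rle_abs (pushU U f phi y)). unfold D. lra. }
    assert (HAlow : forall s, A nu phi s -> nu (fun _ => - D) <= s).
    { intros s [psi [h1 [h2 ->]]]. apply (proj2 hnu); auto. apply cont_const.
      apply (dense_le dY (image U f)); auto. apply cont_const.
      intros z Hz. specialize (h2 z Hz). specialize (HpB phi hphi z Hz).
      pose proof (Rle_abs (- pushU U f phi z)) as Hq. rewrite Rabs_Ropp in Hq. unfold D. lra. }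
    destruct (Rinf_spec (A nu phi) _ (ex_intro _ _ HAin) HAlow) as [H1 H2].
    repeat split; auto. }
  assert (Part1 : forall nu, SMplus dY nu -> SMplus dX (pull dY U f nu)).
  { intros nu hnu. pose proof hnu as [[Hs [Hh [C0 HC0]]] Hpos]. split; [split; [|split]|].
    -
      intros phi psi hphi hpsi.
      pose proof (cont_plus dX phi psi hphi hpsi) as hsum.
      destruct (HAspec nu hnu _ hsum) as [S1 _].
      destruct (HAspec nu hnu _ hphi) as [_ [G1 _]].
      destruct (HAspec nu hnu _ hpsi) as [_ [G2 _]].
      enough (pull dY U f nu (fun x => phi x + psi x) - pull dY U f nu psi <= pull dY U f nu phi) by lra.
      apply G1. intros s [p1 [hp1 [Hp1 ->]]].
      enough (pull dY U f nu (fun x => phi x + psi x) - nu p1 <= pull dY U f nu psi) by lra.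
      apply G2. intros s [p2 [hp2 [Hp2 ->]]].
      assert (pull dY U f nu (fun x => phi x + psi x) <= nu (fun y => p1 y + p2 y)).
      { apply S1. exists (fun y => p1 y + p2 y). split. apply cont_plus; auto. split; auto.
        intros y Hy. unfold pushU. rewrite sumL_plus. fold (pushU U f phi y) (pushU U f psi y).
        specialize (Hp1 y Hy). specialize (Hp2 y Hy). lra. }
      specialize (Hs p1 p2 hp1 hp2). lra.
    -
      intros t phi ht hphi.
      pose proof (cont_scale dX t phi hphi) as htp.
      destruct (HAspec nu hnu _ htp) as [S1 [G1 _]].
      destruct (HAspec nu hnu _ hphi) as [S2 [G2 _]].
      destruct (Rle_lt_or_eq_dec 0 t ht) as [ht'|<-].
      + apply Rle_antisym.
        * enough (pull dY U f nu (fun x => t * phi x) / t <= pull dY U f nu phi).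
          { apply (Rmult_le_compat_l t) in H; [|lra]. field_simplify in H; lra. }
          apply G2. intros s [p [hp [Hp ->]]].
          enough (pull dY U f nu (fun x => t * phi x) <= t * nu p).
          { apply (Rmult_le_compat_l (/t)) in H; [|left; apply Rinv_0_lt_compat; lra].
            unfold Rdiv. rewrite Rmult_comm. replace (/ t * (t * nu p)) with (nu p) in H by (field; lra). auto. }
          rewrite <- (Hh t p ht hp). apply S1. exists (fun y => t * p y). split. apply cont_scale; auto.
          split; auto. intros y Hy. unfold pushU. rewrite sumL_scale. fold (pushU U f phi y).
          specialize (Hp y Hy). nra.
        * apply G1. intros s [p [hp [Hp ->]]].
          enough (pull dY U f nu phi <= / t * nu p).
          { apply (Rmult_le_compat_l t) in H; [|lra]. replace (t * (/ t * nu p)) with (nu p) in H by (field; lra). auto. }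
          rewrite <- (Hh (/t) p ltac:(left; apply Rinv_0_lt_compat; lra) hp).
          apply S2. exists (fun y => / t * p y). split. apply cont_scale; auto. split; auto.
          intros y Hy. specialize (Hp y Hy). unfold pushU in Hp. rewrite sumL_scale in Hp.
          fold (pushU U f phi y) in Hp.
          apply (Rmult_le_compat_l (/t)) in Hp; [|left; apply Rinv_0_lt_compat; lra].
          replace (/ t * (t * pushU U f phi y)) with (pushU U f phi y) in Hp by (field; lra). auto.
      + rewrite Rmult_0_l. apply Rle_antisym.
        * apply Rle_trans with (nu (fun _ => 0)); [|rewrite (sm_zero dY nu hnu); lra]. apply S1. exists (fun _ => 0). split. apply cont_const.
          split; auto. intros y Hy. unfold pushU. rewrite sumL_scale. lra.
        * apply G1. intros s [p [hp [Hp ->]]]. apply Rle_trans with (nu (fun _ => 0)); [rewrite (sm_zero dY nu hnu); lra|]. apply Hpos; auto.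
          apply cont_const. apply (dense_le dY (image U f)); auto. apply cont_const.
          intros y Hy. specialize (Hp y Hy). unfold pushU in Hp. rewrite sumL_scale in Hp. lra.
    -
      exists (INR deg * (Rabs (nu (fun _ => 1)) + Rabs (nu (fun _ => -1)))).
      intros phi hphi. destruct (HAspec nu hnu _ hphi) as [_ [_ [U1 L1]]].
      destruct (Linf_props dX phi cX hphi) as [_ HL].
      pose proof (pos_INR deg).
      assert (HD : 0 <= INR deg * Linf phi) by nra.
      rewrite (sm_const_pos dY nu _ hnu HD) in U1. rewrite (sm_const_neg dY nu _ hnu HD) in L1.
      pose proof (Rle_abs (nu (fun _ => 1))). pose proof (Rle_abs (- nu (fun _ => -1))) as Hq.
      rewrite Rabs_Ropp in Hq. pose proof (Rabs_pos (nu (fun _ => 1))). pose proof (Rabs_pos (nu (fun _ => -1))).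
      apply Rabs_le. split; nra.
    -
      intros phi psi hphi hpsi Hle.
      destruct (HAspec nu hnu _ hphi) as [S1 _]. destruct (HAspec nu hnu _ hpsi) as [_ [G2 _]].
      apply G2. intros s [p [hp [Hp ->]]]. apply S1. exists p. split; auto. split; auto.
      intros y Hy. specialize (Hp y Hy). unfold pushU in *.
      pose proof (sumL_mono (fiber_list U f y) phi psi Hle). lra. }
  split; auto.
  intros nu hnu. pose proof hnu as [_ Hp].
  pose proof (pos_INR deg) as Hd.
  assert (E1 : pull dY U f nu (fun _ => 1) = INR deg * nu (fun _ => 1)).
  { destruct (HAspec nu hnu _ (cont_const dX 1)) as [S1 [G1 _]].
    rewrite <- (sm_const_pos dY nu _ hnu Hd). apply Rle_antisym.
    - apply S1. exists (fun _ => INR deg). split. apply cont_const. split; auto.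
      intros y Hy. rewrite HpC; auto. lra.
    - apply G1. intros s [p [hp [Hp' ->]]]. apply Hp; auto. apply cont_const.
      apply (dense_le dY (image U f)); auto. apply cont_const.
      intros y Hy. specialize (Hp' y Hy). rewrite HpC in Hp'; auto. lra. }
  assert (E2 : pull dY U f nu (fun _ => -1) = INR deg * nu (fun _ => -1)).
  { destruct (HAspec nu hnu _ (cont_const dX (-1))) as [S1 [G1 _]].
    rewrite <- (sm_const_neg dY nu _ hnu Hd). apply Rle_antisym.
    - apply S1. exists (fun _ => - INR deg). split. apply cont_const. split; auto.
      intros y Hy. rewrite HpC; auto. lra.
    - apply G1. intros s [p [hp [Hp' ->]]]. apply Hp; auto. apply cont_const.
      apply (dense_le dY (image U f)); auto. apply cont_const.
      intros y Hy. specialize (Hp' y Hy). rewrite HpC in Hp'; auto. lra. }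
  split; auto. split; auto.
  rewrite (smnorm_lemma dX _ (Part1 nu hnu) cX), (smnorm_lemma dY nu hnu cY). auto.
Qed.
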